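(* (Provability logic.) For every proposition $A$: (GL) $\Box(\Box A\supset A)\supset\Box A$ holds under both $\vdash^H_{\mathbf{CPL}}$ and $\vdash^H_{\mathbf{CPL*}}$ when only transitive accessibility relations are considered. (Löb) $\vdash^H_{\mathbf{CPL}}\Box A\supset A$ implies $\vdash^H_{\mathbf{CPL}}A$, and $\vdash^H_{\mathbf{CPL*}}\Box A\supset A$ implies $\vdash^H_{\mathbf{CPL*}}A$.
   Context: A set $W$ of worlds with a binary accessibility relation $\prec$ is converse well-founded if there is no infinite chain $w_0\prec w_1\prec\cdots$; $\prec^*$ denotes its reflexive–transitive closure. Propositions: $A,B,C ::= Q\mid\bot\mid A\supset B\mid\Diamond A\mid\Box A$ ($Q$ atomic). A context $\Gamma$ is a finite collection of judgments $A[w]$. Given such $(W,\prec)$, $\Gamma\vdash_{\mathbf{CPL}}A[w]$ is defined one world at a time (provability at $w$ after provability at all worlds reachable from $w$ by one or more $\prec$-steps) as the least relation closed under: (hyp) $\Gamma,A[w]\vdash A[w]$; ($\bot E$) $\Gamma\vdash\bot[w]$ implies $\Gamma\vdash C[w]$; ($\supset I$) $\Gamma,A[w]\vdash B[w]$ implies $\Gamma\vdash A\supset B[w]$; ($\supset E$) $\Gamma\vdash A\supset B[w]$ and $\Gamma\vdash A[w]$ imply $\Gamma\vdash B[w]$; ($\Diamond I$) $w\prec w'$ and $\Gamma\vdash A[w']$ imply $\Gamma\vdash\Diamond A[w]$; ($\Box I$) if $\Gamma\vdash A[w']$ for all $w'$ with $w\prec w'$ then $\Gamma\vdash\Box A[w]$;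 ($\Diamond E$) if $\Gamma\vdash\Diamond A[w]$ and for all $w'$ with $w\prec w'$, $\Gamma\vdash A[w']$ implies $\Gamma\vdash C[w]$, then $\Gamma\vdash C[w]$; ($\Box E$) if $\Gamma\vdash\Box A[w]$ and ($\Gamma\vdash A[w']$ for all $w'$ with $w\prec w'$) implies $\Gamma\vdash C[w]$, then $\Gamma\vdash C[w]$. $\Gamma\vdash_{\mathbf{CPL*}}A[w]$ is defined identically except that: ($\bot E$) $w'\prec^* w$ and $\Gamma\vdash\bot[w]$ imply $\Gamma\vdash C[w']$; ($\Diamond E$) if $w''\prec^* w$, $\Gamma\vdash\Diamond A[w]$, and for all $w'$ with $w\prec w'$, $\Gamma\vdash A[w']$ implies $\Gamma\vdash C[w'']$, then $\Gamma\vdash C[w'']$; ($\Box E$) if $w''\prec^* w$, $\Gamma\vdash\Box A[w]$, and ($\Gamma\vdash A[w']$ for all $w'$ with $w\prec w'$) implies $\Gamma\vdash C[w'']$, then $\Gamma\vdash C[w'']$. $\vdash^H_{\mathbf{CPL}}A$ means: for every converse well-founded $(W,\prec)$, every $w\in W$ and every context $\Gamma$, $\Gamma\vdash_{\mathbf{CPL}}A[w]$; likewise $\vdash^H_{\mathbf{CPL*}}A$ with $\vdash_{\mathbf{CPL*}}$. ''Holds when only transitive accessibility relations are considered'' means the same quantification restricted to transitive $\prec$. *)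

(* Defs.v *)
From Stdlib Require Import List Relations Classical ClassicalEpsilon
  Wellfounded.Transitive_Closure.
Import ListNotations.
Set Implicit Arguments.

Inductive form : Type :=
| Atom : nat -> form
| Bot : form
| Imp : form -> form -> form
| Dia : form -> form
| Box : form -> form.

(* A context: a finite collection of judgments A[w]. *)
Definition ctx (W : Type) := list (form * W).

Definition conv_wf (W : Type) (R : W -> W -> Prop) : Prop :=
  ~ exists f : nat -> W, forall n, R (f n) (f (S n)).

Lemma conv_wf_wf (W : Type) (R : W -> W -> Prop) :
  conv_wf R -> well_founded (fun x y => R y x).
Proof.
  intros H x. apply NNPP. intro Hx.
  assert (step : forall z : {z : W | ~ Acc (fun x y => R y x) z},
             {y : {y : W | ~ Acc (fun x y => R y x) y} | R (proj1_sig z) (proj1_sig y)}).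
  { intros [z Hz]. apply constructive_indefinite_description.
    apply NNPP. intro Hn. apply Hz. constructor. intros y Hy.
    apply NNPP. intro Hy'. apply Hn. exists (exist _ y Hy'). exact Hy. }
  set (g := fix g (n : nat) : {z : W | ~ Acc (fun x y => R y x) z} :=
              match n with O => exist _ x Hx | S m => proj1_sig (step (g m)) end).
  apply H. exists (fun n => proj1_sig (g n)). intro n. simpl.
  exact (proj2_sig (step (g n))).
Qed.

Section Rules.
Variables (W : Type) (R : W -> W -> Prop).

(* Rules of CPL at world w; [P u G A] stands for the (already defined)
   provability G |- A[u] at a successor world u. *)
Inductive cpl_step (P : W -> ctx W -> form -> Prop) (w : W) : ctx W -> form -> Prop :=
| cpl_hyp G A : In (A, w) G -> cpl_step P w G A
| cpl_botE G C : cpl_step P w G Bot -> cpl_step P w G C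
| cpl_impI G A B : cpl_step P w ((A, w) :: G) B -> cpl_step P w G (Imp A B)
| cpl_impE G A B : cpl_step P w G (Imp A B) -> cpl_step P w G A -> cpl_step P w G B
| cpl_diaI G A w' : R w w' -> P w' G A -> cpl_step P w G (Dia A)
| cpl_boxI G A : (forall w', R w w' -> P w' G A) -> cpl_step P w G (Box A)
| cpl_diaE G A C : cpl_step P w G (Dia A) ->
    (forall w', R w w' -> P w' G A -> cpl_step P w G C) -> cpl_step P w G C
| cpl_boxE G A C : cpl_step P w G (Box A) ->
    ((forall w', R w w' -> P w' G A) -> cpl_step P w G C) -> cpl_step P w G C.

(* Rules of CPL* at world v; [P u G A] stands for G |- A[u] at a world u
   strictly reachable from v (v R+ u).  A premise at a world w with v R* w
   is split into the two cases w = v and v R+ w. *)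
Inductive cpls_step (P : W -> ctx W -> form -> Prop) (v : W) : ctx W -> form -> Prop :=
| cpls_hyp G A : In (A, v) G -> cpls_step P v G A
| cpls_botE_refl G C : cpls_step P v G Bot -> cpls_step P v G C
| cpls_botE_trans G C w : clos_trans W R v w -> P w G Bot -> cpls_step P v G C
| cpls_impI G A B : cpls_step P v ((A, v) :: G) B -> cpls_step P v G (Imp A B)
| cpls_impE G A B : cpls_step P v G (Imp A B) -> cpls_step P v G A -> cpls_step P v G B
| cpls_diaI G A w' : R v w' -> P w' G A -> cpls_step P v G (Dia A)
| cpls_boxI G A : (forall w', R v w' -> P w' G A) -> cpls_step P v G (Box A)
| cpls_diaE_refl G A C : cpls_step P v G (Dia A) ->
    (forall w', R v w' -> P w' G A -> cpls_step P v G C) -> cpls_step P v G C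
| cpls_diaE_trans G A C w : clos_trans W R v w -> P w G (Dia A) ->
    (forall w', R w w' -> P w' G A -> cpls_step P v G C) -> cpls_step P v G C
| cpls_boxE_refl G A C : cpls_step P v G (Box A) ->
    ((forall w', R v w' -> P w' G A) -> cpls_step P v G C) -> cpls_step P v G C
| cpls_boxE_trans G A C w : clos_trans W R v w -> P w G (Box A) ->
    ((forall w', R w w' -> P w' G A) -> cpls_step P v G C) -> cpls_step P v G C.

End Rules.

Definition derivCPL (W : Type) (R : W -> W -> Prop) (H : conv_wf R)
  : W -> ctx W -> form -> Prop :=
  Fix (conv_wf_wf H) (fun _ => ctx W -> form -> Prop)
    (fun w rec => cpl_step R (fun u G A => exists h : R w u, rec u h G A) w).

Definition derivCPLs (W : Type) (R : W -> W -> Prop) (H : conv_wf R)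
  : W -> ctx W -> form -> Prop :=
  Fix (wf_clos_trans W (fun x y => R y x) (conv_wf_wf H))
    (fun _ => ctx W -> form -> Prop)
    (fun v rec => cpls_step R
       (fun u G A => exists h : clos_trans W (fun x y => R y x) u v, rec u h G A) v).

Definition provH_CPL (A : form) : Prop :=
  forall (W : Type) (R : W -> W -> Prop) (H : conv_wf R) (w : W) (G : ctx W),
    derivCPL H w G A.
Definition provH_CPLs (A : form) : Prop :=
  forall (W : Type) (R : W -> W -> Prop) (H : conv_wf R) (w : W) (G : ctx W),
    derivCPLs H w G A.

Definition provH_CPL_trans (A : form) : Prop :=
  forall (W : Type) (R : W -> W -> Prop) (H : conv_wf R), transitive W R ->
    forall (w : W) (G : ctx W), derivCPL H w G A.
Definition provH_CPLs_trans (A : form) : Prop :=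
  forall (W : Type) (R : W -> W -> Prop) (H : conv_wf R), transitive W R ->
    forall (w : W) (G : ctx W), derivCPLs H w G A.

Definition GL (A : form) : form := Imp (Box (Imp (Box A) A)) (Box A).

(* Main.v *)
Require Import Defs.
From Stdlib Require Import List Relations Classical FunctionalExtensionality
  Wellfounded.Transitive_Closure.

Lemma dCPL_eq (W : Type) (R : W -> W -> Prop) (H : conv_wf R) (w : W) :
  derivCPL H w = cpl_step R (fun u G A => exists h : R w u, derivCPL H u G A) w.
Proof.
  unfold derivCPL. rewrite Fix_eq. reflexivity.
  intros x f g Hfg.
  assert (E : f = g).
  { apply functional_extensionality_dep; intro y.
    apply functional_extensionality_dep; intro p. apply Hfg. }
  subst. reflexivity.
Qed.

Lemma dCPLs_eq (W : Type) (R : W -> W -> Prop) (H : conv_wf R) (w : W) :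
  derivCPLs H w = cpls_step R
    (fun u G A => exists h : clos_trans W (fun x y => R y x) u w, derivCPLs H u G A) w.
Proof.
  unfold derivCPLs. rewrite Fix_eq. reflexivity.
  intros x f g Hfg.
  assert (E : f = g).
  { apply functional_extensionality_dep; intro y.
    apply functional_extensionality_dep; intro p. apply Hfg. }
  subst. reflexivity.
Qed.

Theorem theorem7 (A : form) :
  (provH_CPL_trans (GL A) /\ provH_CPLs_trans (GL A)) /\
  ((provH_CPL (Imp (Box A) A) -> provH_CPL A) /\
   (provH_CPLs (Imp (Box A) A) -> provH_CPLs A)).
Proof.
  split; [split|split].
  - intros W R H Htr w G. unfold GL. rewrite dCPL_eq.
    apply cpl_impI.
    set (G' := (Box (Imp (Box A) A), w) :: G).
    apply cpl_boxE with (A := Imp (Box A) A).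
    { apply cpl_hyp. simpl. left. reflexivity. }
    intro K. apply cpl_boxI.
    assert (M : forall w', R w w' -> derivCPL H w' G' A).
    { intro w'. induction w' as [w' IH] using (well_founded_ind (conv_wf_wf H)).
      intro Hw. destruct (K w' Hw) as [_ Kw]. rewrite dCPL_eq in Kw |- *.
      eapply cpl_impE; [exact Kw|].
      apply cpl_boxI. intros u Hu. exists Hu. apply IH; [exact Hu|].
      exact (Htr _ _ _ Hw Hu). }
    intros w' Hw. exists Hw. apply M; exact Hw.
  - intros W R H Htr w G. unfold GL. rewrite dCPLs_eq.
    apply cpls_impI.
    set (G' := (Box (Imp (Box A) A), w) :: G).
    apply cpls_boxE_refl with (A := Imp (Box A) A).
    { apply cpls_hyp. simpl. left. reflexivity. }
    intro K. apply cpls_boxI.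
    assert (M : forall w', R w w' -> derivCPLs H w' G' A).
    { intro w'. induction w' as [w' IH] using (well_founded_ind (conv_wf_wf H)).
      intro Hw. destruct (K w' Hw) as [_ Kw]. rewrite dCPLs_eq in Kw |- *.
      eapply cpls_impE; [exact Kw|].
      apply cpls_boxI. intros u Hu. exists (t_step W (fun x y => R y x) _ _ Hu). apply IH; [exact Hu|].
      exact (Htr _ _ _ Hw Hu). }
    intros w' Hw. exists (t_step W (fun x y => R y x) _ _ Hw). apply M; exact Hw.
  - intros HP W R H w G.
    induction w as [w IH] using (well_founded_ind (conv_wf_wf H)).
    specialize (HP W R H w G). rewrite dCPL_eq in HP |- *.
    eapply cpl_impE; [exact HP|].
    apply cpl_boxI. intros u Hu. exists Hu. apply IH; exact Hu.
  - intros HP W R H w G.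
    induction w as [w IH] using (well_founded_ind (conv_wf_wf H)).
    specialize (HP W R H w G). rewrite dCPLs_eq in HP |- *.
    eapply cpls_impE; [exact HP|].
    apply cpls_boxI. intros u Hu. exists (t_step W (fun x y => R y x) _ _ Hu). apply IH; exact Hu.
Qed.
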